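(* Let $r(t)\in\mathbb{Z}[t]$ with $r(0)\neq0$, and let $X$ be the set of roots of $r(t)$ in $\overline{\mathbb{Q}}^\times$. The following are equivalent: (i) $X$ is not an arithmetically-free subset of $(\overline{\mathbb{Q}}^\times,\cdot)$; (ii) there exist $u\in\mathbb{N}$ and $s(t)\in\mathbb{Z}[t]\setminus\mathbb{Z}$ such that both the cyclotomic polynomial $\Phi_u(t)$ and $s(t^u)$ divide $r(t)$ in $\mathbb{Z}[t]$.
   Context: $\mathbb{N}=\{1,2,\dots\}$. A finite subset $X$ of an abelian group $(A,\cdot)$ is arithmetically-free if $X$ contains no progression $\lambda,\lambda\mu,\lambda\mu^2,\dots,\lambda\mu^{|X|}$ with $\lambda,\mu\in X$. $\Phi_u(t)$ denotes the $u$-th cyclotomic polynomial. *)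

(* Defs.v *)
From mathcomp Require Import all_boot all_order all_algebra all_field.
From mathcomp Require Import finmap.
Set Implicit Arguments. Unset Strict Implicit. Unset Printing Implicit Defensive.
Import Order.TTheory GRing.Theory Num.Theory.
Local Open Scope ring_scope.
Local Open Scope fset_scope.

(* Qbar is modelled by algC (the algebraic closure of Q). *)

Definition arith_free (X : {fset algC}) : Prop :=
  ~ exists lam mu : algC,
      [/\ lam \in X, mu \in X &
          forall k : nat, (k <= #|` X|)%N -> lam * mu ^+ k \in X].

(* Divisibility in Z[t] (genuine, not up to rational scalars). *)
Definition dvdZpoly (p q : {poly int}) : Prop := exists c : {poly int}, q = c * p.

(* Main.v *)
From HB Require Import structures.
Require Import Defs.
From mathcomp Require Import all_boot all_order all_algebra all_field.
From mathcomp Require Import finmap.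
From Stdlib Require Import Classical_Prop.
Set Implicit Arguments. Unset Strict Implicit. Unset Printing Implicit Defensive.
Import Order.TTheory GRing.Theory Num.Theory.
Local Open Scope ring_scope.

Lemma aut_conj (a b : algC) : root (minCpoly a) b ->
  exists nu : {rmorphism algC -> algC}, nu a = b.
Proof.
move=> rb.
have [q [Dq mon_q] dv_q] := minCpolyP a.
have [rs Drs] := closed_field_poly_normal (minCpoly a).
rewrite (monicP (minCpoly_monic a)) scale1r in Drs.
have [Qs [QsC [s1 Ds1 genQs]]] := num_field_exists (a :: rs).
case: s1 Ds1 genQs => [|aa ss] //= [Daa Dss] genQs.
have Sinj_poly (p : {poly rat}) :
  map_poly QsC (map_poly (in_alg Qs) p) = map_poly ratr p.
  rewrite -map_poly_comp; apply: eq_map_poly => c.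
  by rewrite /= rmorphZ_num rmorph1 mulr1.
have : b \in rs by rewrite -root_prod_XsubC -Drs.
rewrite -Dss => /mapP[bb bbin Dbb].
have rbb : root (map_poly \1%VF (minPoly 1 aa)) bb.
  rewrite lfun1_poly -(fmorph_root QsC) -Dbb.
  have /polyOver1P[q1 Dq1] := minPolyOver 1 aa.
  have : root (map_poly QsC (minPoly 1 aa)) a by rewrite -Daa fmorph_root root_minPoly.
  rewrite Dq1 Sinj_poly dv_q => /dvdpP[q2 ->].
  rewrite rmorphM rootM; apply/orP; right. move: rb; rewrite Dq. by [].
have homf := kHomExtendP (sub1v 1) (kHom1 1 1) rbb.
have Kp : map_poly (in_alg Qs) q \is a polyOver 1%VS by apply/polyOver1P; exists q.
have spl : splittingFieldFor <<1; aa>>%VS (map_poly (in_alg Qs) q) fullv.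
  exists ss; last by rewrite -adjoin_cons.
  have -> : map_poly (in_alg Qs) q = \prod_(z <- ss) ('X - z%:P).
    apply: (map_inj_poly (fmorph_inj QsC)); first exact: rmorph0.
    rewrite Sinj_poly -Dq Drs -Dss big_map rmorph_prod /=.
    by apply: eq_bigr => z _; rewrite map_polyXsubC.
  exact: eqpxx.
have [g homg Dg] := kHom_extends (sub1v _) homf Kp spl.
have gm : monoid_morphism g by apply/kHom_monoid_morphism.
pose gmM := GRing.isMonoidMorphism.Build _ _ g gm.
pose gRM : {rmorphism _ -> _} := HB.pack (fun_of_lfun g) gmM.
have [nu Dnu] := extend_algC_subfield_aut QsC gRM.
exists nu; rewrite -Daa -Dnu /= -Dg ?memv_adjoin //.
by rewrite (kHomExtend_val (kHom1 1 1)).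
Qed.

Lemma sep_closed (P : {poly algC}) :
  (forall z, root P z -> ~~ root P^`() z) -> separable_poly P.
Proof.
move=> H; rewrite unlock /coprimep; apply: contraT => /closed_rootP[z rz].
have r1 : root P z := root_dvdp (dvdp_gcdl _ _) rz.
by move: (H z r1); rewrite (root_dvdp (dvdp_gcdr _ _) rz).
Qed.

Lemma dvd_closed (P R : {poly algC}) : separable_poly P ->
  (forall z, root P z -> root R z) -> P %| R.
Proof.
move=> sP H; have nzP := separable_poly_neq0 sP.
have [zs Dp] := closed_field_poly_normal P.
have lc0 : lead_coef P != 0 by rewrite lead_coef_eq0.
rewrite Dp dvdpZl //; apply: uniq_roots_dvdp.
  by apply/allP => z zin; apply: H; rewrite Dp rootZ // root_prod_XsubC.
rewrite uniq_rootsE -separable_prod_XsubC -(eqp_separable (eqp_scale _ lc0)) -Dp //.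
Qed.

Lemma monic_div (M R : {poly int}) : M \is monic ->
  map_poly (intr : int -> rat) M %| map_poly (intr : int -> rat) R ->
  exists c : {poly int}, R = c * M.
Proof.
move=> monM /dvdpP_rat_int[p1 [c nzc DM] [r' Dr]].
have lc1 : 1 = c * (lead_coef p1)%:~R.
  have := congr1 lead_coef DM.
  rewrite lead_coefZ !lead_coef_map_inj //; try exact: intr_inj.
  by rewrite (monicP monM).
have Dp1 : p1 = lead_coef p1 *: M.
  apply: (map_inj_poly (@intr_inj rat)) => //.
  rewrite map_polyZ /= DM scalerA mulrC -lc1 scale1r //.
exists (lead_coef p1 *: r'); by rewrite Dr {1}Dp1 -!scalerAl mulrC.
Qed.

Lemma map_ratint (p : {poly int}) :
  map_poly (ratr : rat -> algC) (map_poly (intr : int -> rat) p) = map_poly intr p.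
Proof. by rewrite -map_poly_comp; apply: eq_map_poly => x /=; rewrite rmorph_int. Qed.

Lemma minC_sep (a w : algC) : root (minCpoly a) w -> ~~ root (minCpoly a)^`() w.
Proof.
move=> rw; have [nu Dnu] := aut_conj rw.
have [q [Dq mon_q] dv_q] := minCpolyP a.
apply/negP; rewrite Dq deriv_map -Dnu.
have -> : map_poly ratr q^`() = map_poly nu (map_poly ratr q^`()).
  by rewrite -map_poly_comp; apply: eq_map_poly => x /=; rewrite fmorph_rat.
rewrite fmorph_root dv_q => dq.
have nzq : q != 0 by apply: monic_neq0.
have nzq' : q^`() != 0.
  have : (1 < size q)%N by have := size_minCpoly a; rewrite Dq size_map_poly.
  case Dn: (size q) => [|[|n]] // _.
  apply/eqP => q0; have := congr1 (fun p : {poly rat} => p`_n) q0.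
  rewrite /= coef_deriv coef0 -[n.+1]/(n.+2.-1) -Dn -lead_coefE (monicP mon_q).
  by rewrite Dn => /eqP; rewrite pnatr_eq0.
by have := dvdp_leq nzq' dq; rewrite leqNgt lt_size_deriv.
Qed.

Local Open Scope fset_scope.

Theorem proposition3p12 (r : {poly int}) (X : {fset algC}) :
  r.[0] != 0 ->
  (forall x : algC, x \in X <-> (x != 0 /\ root (map_poly intr r) x)) ->
  (~ arith_free X <->
   exists (u : nat) (s : {poly int}),
     [/\ (0 < u)%N, (1 < size s)%N,
         dvdZpoly ('Phi_u) r & dvdZpoly (s \Po 'X^u) r]).
Proof.
move=> r0 HX.
have nz_root : forall x, root (map_poly intr r) x -> x \in X.
  move=> x rx; apply/HX; split=> //; apply: contraTneq rx => ->.
  by rewrite rootE horner_coef0 coef_map /= intr_eq0 -horner_coef0.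
split.
- move=> nAF.
  have [lam [mu [lX muX H]]] := NNPP _ nAF.
  have [lnz rl] := (HX lam).1 lX.
  have [munz rmu] := (HX mu).1 muX.
  set n := #|` X| in H.
  pose sq := [seq lam * mu ^+ k | k <- iota 0 n.+1].
  have : ~~ uniq sq.
    apply/negP => usq.
    have : {subset sq <= X}.
      move=> x /mapP[k]; rewrite mem_iota => /andP[_ kn] ->; apply: H; exact: kn.
    move/(uniq_leq_size usq); rewrite size_map size_iota.
    by rewrite ltnn.
  case/(uniqPn 0) => i [j [ij jsz eqij]].
  rewrite size_map size_iota in jsz.
  rewrite !(nth_map 0) ?size_iota ?(ltn_trans ij jsz) // !nth_iota ?(ltn_trans ij jsz) // !add0n in eqij.
  have eqij' := mulfI lnz eqij.
  have mu1 : mu ^+ (j - i) = 1.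
    apply: (mulfI (expf_neq0 i munz)); rewrite mulr1 -exprD subnKC ?(ltnW ij) //.
  have ji0 : (0 < j - i)%N by rewrite subn_gt0.
  have [u primu udvd] := prim_order_exists ji0 mu1.
  have u0 := prim_order_gt0 primu.
  have un : (u <= n)%N.
    apply: (leq_trans (dvdn_leq ji0 udvd)); apply: (leq_trans (leq_subr i j)).
    by rewrite -ltnS.
  have Hk : forall k, root (map_poly intr r) (lam * mu ^+ k).
    move=> k; rewrite -(prim_expr_mod primu).
    have := (HX _).1 (H (k %% u)%N (ltnW (leq_trans (ltn_pmod k u0) un))).
    by case.
  exists u.
  have dPhi : dvdZpoly 'Phi_u r.
    apply: monic_div (Cyclotomic_monic u) _.
    have [q [Dq _] dvq] := minCpolyP mu.
    have -> : map_poly intr 'Phi_u = q.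
      apply: (map_inj_poly (fmorph_inj (@ratr algC))); first exact: rmorph0.
      by rewrite map_ratint -Dq (minCpoly_cyclotomic primu) -(Cintr_Cyclotomic primu).
    by rewrite -dvq map_ratint.
  set a := lam ^+ u.
  have anz : a != 0 by rewrite expf_neq0.
  have [q [Dq monq] dvq] := minCpolyP a.
  pose P := map_poly ratr (q \Po 'X^u) : {poly algC}.
  have DP : P = minCpoly a \Po 'X^u by rewrite /P map_comp_poly map_polyXn Dq.
  have rootP : forall z, root P z -> root (map_poly intr r) z.
    move=> z; rewrite DP rootE horner_comp hornerXn -rootE => /aut_conj[nu Dnu].
    have wprim : u.-primitive_root (nu mu) by rewrite fmorph_primitive_root.
    have l'nz : nu lam != 0 by rewrite fmorph_eq0.
    have : (z / nu lam) ^+ u = 1.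
      rewrite exprMn exprVn -rmorphXn -/a Dnu divff // -Dnu fmorph_eq0 //.
    case/(prim_rootP wprim) => k Dk.
    have -> : z = nu (lam * mu ^+ k) by rewrite rmorphM rmorphXn -Dk mulrC divfK.
    have <- : map_poly nu (map_poly intr r) = map_poly intr r.
      by rewrite -map_poly_comp; apply: eq_map_poly => x /=; rewrite rmorph_int.
    by rewrite fmorph_root Hk.
  have sepP : separable_poly P.
    apply: sep_closed => z rz; rewrite DP deriv_comp derivXn rootM negb_or.
    have znz : z != 0 by have [] := (HX z).1 (nz_root z (rootP z rz)).
    apply/andP; split.
      move: rz; rewrite DP !rootE !horner_comp hornerXn -!rootE; exact: minC_sep.
    by rewrite rootE hornerMn hornerXn mulrn_eq0 negb_or -lt0n u0 /= expf_neq0.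
  have dP : P %| map_poly intr r := dvd_closed sepP rootP.
  have dQ : q \Po 'X^u %| map_poly (intr : int -> rat) r.
    by rewrite -(dvdp_map (@ratr algC)) map_ratint.
  case/dvdpP_rat_int: dQ => p1 [c nzc Dp1] [r' Dr'].
  pose s := \poly_(i < size p1) p1`_(i * u).
  have Ds : s \Po 'X^u = p1.
    apply/polyP => i0; rewrite coef_comp_poly_Xn //.
    case: ifP => [/dvdnP[k ->] | nui].
      rewrite coef_poly mulnK //; case: ltnP => // kp.
      by rewrite nth_default // (leq_trans kp) // leq_pmulr.
    have := congr1 (fun p : {poly rat} => p`_i0) Dp1.
    rewrite /= coefZ coef_map coef_comp_poly_Xn // nui /=.
    by move/esym/eqP; rewrite mulf_eq0 (negbTE nzc) /= intr_eq0 => /eqP.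
  exists s; split => //.
    have sq1 : (1 < size q)%N by have := size_minCpoly a; rewrite Dq size_map_poly.
    have szp1 : size p1 = size (q \Po 'X^u).
      by rewrite Dp1 size_scale // size_map_inj_poly //; exact: intr_inj.
    have := size_comp_poly s ('X^u : {poly int}); rewrite Ds size_polyXn /= szp1.
    rewrite size_comp_poly size_polyXn /=.
    move=> h; case Es: (size s) h => [|[|m]] // h; exfalso; move: h.
    1,2: move=> h; have /eqP : ((size q).-1 * u)%N = 0%N by rewrite h.
    1,2: rewrite muln_eq0 => /orP[/eqP|/eqP u00]; [by case: (size q) sq1 => [|[|]] | by rewrite u00 in u0].


  by exists r'; rewrite Ds Dr' mulrC.
- case=> u [s [u0 s1 [c1 Dc1] [c2 Dc2]]] AF; apply: AF.
  have [z primz] := C_prim_root_exists u0.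
  have rz : root (map_poly intr r) z.
    by rewrite Dc1 rmorphM /= rootM (Cintr_Cyclotomic primz) (root_cyclotomic primz) primz orbT.
  have /closed_rootP[a ra] : size (map_poly (intr : int -> algC) s) != 1%N.
    rewrite size_map_inj_poly ?neq_ltn ?s1 ?orbT //.
    exact: intr_inj.
  pose lam := u.-root a.
  have la : lam ^+ u = a := rootCK u0 a.
  have Hk : forall k, root (map_poly intr r) (lam * z ^+ k).
    move=> k; rewrite Dc2 rmorphM /= rootM map_comp_poly map_polyXn; apply/orP; right.
    rewrite rootE horner_comp hornerXn exprMn la -exprM mulnC exprM.
    by rewrite (prim_expr_order primz) expr1n mulr1 -rootE.
  exists lam, z; split.
  + by rewrite -[lam]mulr1 -(expr0 z); apply: nz_root.
  + exact: nz_root.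
  + by move=> k _; apply: nz_root.
Qed.
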